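(* Consider the linear advection equation $\partial_t u+\partial_x(\lambda u)=0$ with constant $\lambda>0$ on a uniform grid of $\mathbb{R}$ with cells $T^{(i)}=[x_{i-1/2},x_{i+1/2}]$, $x_{i+1/2}=(i+\tfrac12)h$, $h>0$. Let $N\le M$ be integers, let $\mathcal{V}_h$ be the space of functions that are polynomials of degree at most $N$ on each cell, and let $t\mapsto u_h(\cdot,t)\in\mathcal{V}_h$ be differentiable in $t$. Let $w_h(\cdot,t)$ be piecewise polynomial of degree at most $M$ on each cell, satisfying $\int_{T^{(i)}}\varphi\, w_h\,dx=\int_{T^{(i)}}\varphi\, u_h\,dx$ for all cells $T^{(i)}$ and all $\varphi\in\mathcal{V}_h$. Denote one-sided limits at interfaces by $u^{\pm}_{i+1/2}$, $w^{\pm}_{i+1/2}$ (superscript $-$: limit from the left, $+$: from the right). Suppose $u_h$ satisfies the semi-discrete $P_NP_M$ scheme with the upwind flux $f^w_{i+1/2}=\lambda w^-_{i+1/2}$: $$\int_{T^{(i)}}\partial_t u_h\,\varphi\,dx+f^w_{i+1/2}\varphi^-_{i+1/2}-f^w_{i-1/2}\varphi^+_{i-1/2}-\int_{T^{(i)}}\lambda w_h\,\varphi'\,dx=0\quad\text{for all }\varphi\in\mathcal{V}_h\text{ and all } i.$$ Let $E^{(i)}(t)=\int_{T^{(i)}}\tfrac12 u_h(x,t)^2\,dx$, $g(u)=\lambda u^2/2$ and $\tilde F_{i+1/2}=f^w_{i+1/2}u^-_{i+1/2}-g(u^-_{i+1/2})$. If at the interface $x_{i-1/2}$ either (a) $u^-_{i-1/2}>u^+_{i-1/2}$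 and $w^-_{i-1/2}\ge \tfrac12\big(u^-_{i-1/2}+u^+_{i-1/2}\big)$, or (b) $u^-_{i-1/2}<u^+_{i-1/2}$ and $w^-_{i-1/2}\le \tfrac12\big(u^-_{i-1/2}+u^+_{i-1/2}\big)$, then the cell square-entropy inequality $$\frac{d}{dt}E^{(i)}+\tilde F_{i+1/2}-\tilde F_{i-1/2}\le 0$$ holds for the cell $T^{(i)}$.
   Context: $\tilde F_{i+1/2}$ is a numerical entropy flux consistent with the entropy flux $F(u)=f(u)u-g(u)$ of the square entropy $Q(u)=u^2/2$, where $g$ is a primitive of $f(u)=\lambda u$. The function $w_h$ is the high-order reconstruction of $u_h$ used in the $P_NP_M$ scheme; only the stated moment-preservation property of $w_h$ is assumed. *)

(* Defs.v *)
From HB Require Import structures.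
From mathcomp Require Import all_boot all_order all_algebra.
From mathcomp Require Import all_classical all_reals all_analysis.
Set Implicit Arguments. Unset Strict Implicit. Unset Printing Implicit Defensive.
Import Order.TTheory GRing.Theory Num.Theory.
Import numFieldNormedType.Exports.
Local Open Scope classical_set_scope.
Local Open Scope ring_scope.

Section Grid.
Variable R : realType.

Definition xhalf (h : R) (j : int) : R := (j%:~R + 1 / 2) * h.

Definition cell (h : R) (j : int) : set R :=
  `[xhalf h (j - 1), xhalf h j]%classic.

Definition cint (h : R) (j : int) (f : R -> R) : R :=
  \int[lebesgue_measure]_(x in cell h j) f x.

(* A piecewise-polynomial function of x (time t fixed) is represented by the
   family of its restrictions to the cells:  P j t : {poly R} is the
   polynomial equal to the function on T^(j). *)
Definition lim_minus (h : R) (P : int -> R -> {poly R}) (j : int) (t : R) : R :=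
  (P j t).[xhalf h j].
Definition lim_plus (h : R) (P : int -> R -> {poly R}) (j : int) (t : R) : R :=
  (P (j + 1) t).[xhalf h j].

Definition flux_w (lam h : R) (w : int -> R -> {poly R}) (j : int) (t : R) : R :=
  lam * lim_minus h w j t.

Definition g_prim (lam : R) (v : R) : R := lam * v ^+ 2 / 2.

Definition Ftilde (lam h : R) (u w : int -> R -> {poly R}) (j : int) (t : R) : R :=
  flux_w lam h w j t * lim_minus h u j t - g_prim lam (lim_minus h u j t).

Definition Ecell (h : R) (u : int -> R -> {poly R}) (j : int) (t : R) : R :=
  cint h j (fun x => (u j t).[x] ^+ 2 / 2).

End Grid.

(* Main.v *)
Require Import Defs.
From HB Require Import structures.
From mathcomp Require Import all_boot all_order all_algebra.
From mathcomp Require Import all_classical all_reals all_analysis.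
From mathcomp Require Import ring lra.
Set Implicit Arguments. Unset Strict Implicit. Unset Printing Implicit Defensive.
Import Order.TTheory GRing.Theory Num.Theory.
Import numFieldNormedType.Exports.
Local Open Scope classical_set_scope.
Local Open Scope ring_scope.
Section D.
Variable R : realType.

Lemma is_derive_sumf n (h : 'I_n -> R -> R) (dh : 'I_n -> R) (x : R) :
  (forall i, is_derive x 1 (h i) (dh i)) ->
  is_derive x (1:R) (fun r => \sum_(i < n) h i r) (\sum_(i < n) dh i).
Proof. by move=> H; rewrite -fct_sumE; exact: is_derive_sum. Qed.

Lemma is_derive_prod2 (f g : R -> R) (df dg c x : R) :
  is_derive x 1 f df -> is_derive x 1 g dg ->
  is_derive x (1:R) (fun r => f r * g r * c) ((df * g x + f x * dg) * c).
Proof.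
move=> Hf Hg.
have H := is_deriveM Hf Hg.
have H2 := is_deriveZ c H.
have -> : (fun r => f r * g r * c) = c \*: (f * g).
  by apply/funext => r /=; rewrite mulrC.
apply: (is_derive_eq H2).
rewrite /GRing.scale /=. ring.
Qed.

Lemma quad_deriv n (a : 'I_n -> R -> R) (da : 'I_n -> R) (C : 'I_n -> 'I_n -> R) (t : R) :
  (forall k l, C k l = C l k) -> (forall k, is_derive t (1:R) (a k) (da k)) ->
  is_derive t (1:R) (fun r => \sum_k \sum_l a k r * a l r * C k l)
    (2 * \sum_k \sum_l da k * a l t * C k l).
Proof.
move=> Cs Ha.
apply: is_derive_eq.
  by apply: is_derive_sumf => k; apply: is_derive_sumf => l.
transitivity (\sum_k \sum_l (da k * a l t * C k l + a k t * da l * C k l)).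
  apply: eq_bigr => k _; apply: eq_bigr => l _.
  by rewrite /= scaler0 add0r /GRing.scale /=; ring.
under eq_bigr do rewrite big_split /=.
rewrite big_split /= mulr2n mulrDl mul1r; congr (_ + _).
rewrite exchange_big /=; apply: eq_bigr => k _; apply: eq_bigr => l _.
by rewrite Cs; ring.
Qed.
End D.
Section J.
Variable R : realType.
Variables a b : R.
Hypothesis ab : a < b.
Definition J (p : {poly R}) : R :=
  \int[@lebesgue_measure R]_(x in `[a, b]) p.[x].

Lemma Jint (p : {poly R}) :
  (@lebesgue_measure R).-integrable `[a, b] (EFin \o horner p).
Proof.
apply: continuous_compact_integrable; first exact: segment_compact.
by apply/continuous_subspaceT => x; exact: continuous_horner.
Qed.

Lemma JD p q : J (p + q) = J p + J q.
Proof.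
rewrite /J; under eq_Rintegral do rewrite hornerD.
by rewrite RintegralD //; exact: Jint.
Qed.

Lemma JZ c p : J (c *: p) = c * J p.
Proof.
rewrite /J; under eq_Rintegral do rewrite hornerZ.
by rewrite RintegralZl //; exact: Jint.
Qed.

Lemma J0 : J 0 = 0.
Proof. by rewrite -(scale0r 0) JZ mul0r. Qed.

Lemma J_sum n (F : 'I_n -> {poly R}) : J (\sum_(i < n) F i) = \sum_(i < n) J (F i).
Proof. exact: (big_morph J JD J0). Qed.

Lemma J_ftc p : J (p^`() * p) = (p.[b] ^+ 2 - p.[a] ^+ 2) / 2.
Proof.
rewrite /J /Rintegral.
rewrite (@continuous_FTC2 _ (horner (p^`() * p)) (horner (2^-1 *: (p * p)))).
- by rewrite !hornerE /=; field.
- exact: ab.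
- apply: continuous_subspaceT; exact: continuous_horner.
- split.
  + by move=> x _; exact: derivable_horner.
  + by apply: cvg_at_right_filter; exact: continuous_horner.
  + by apply: cvg_at_left_filter; exact: continuous_horner.
- move=> x _; rewrite -derivE derivZ derivM !hornerE.
  by field.
Qed.
Lemma J_bil n (L : 'I_n -> {poly R}) (p q : 'I_n -> R) :
  J ((\sum_k p k *: L k) * (\sum_l q l *: L l)) =
  \sum_k \sum_l p k * q l * J (L k * L l).
Proof.
rewrite mulr_suml J_sum; apply: eq_bigr => k _.
rewrite mulr_sumr J_sum; apply: eq_bigr => l _.
by rewrite -scalerAl -scalerAr scalerA JZ.
Qed.
End J.

Lemma cintJ (R : realType) (h : R) j (p : {poly R}) :
  cint h j (horner p) = J (xhalf h (j - 1)) (xhalf h j) p.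
Proof. by []. Qed.

Lemma is_derive_mulc (R : realType) (f : R -> R) (df c x : R) :
  is_derive x 1 f df -> is_derive x (1:R) (fun r => f r * c) (df * c).
Proof.
move=> Hf; have H2 := is_deriveZ c Hf.
have -> : (fun r => f r * c) = c \*: f by apply/funext => r /=; rewrite mulrC.
by apply: (is_derive_eq H2); rewrite /GRing.scale /= mulrC.
Qed.
Theorem mainTheorem3 (R : realType) (lam h : R) (N M : nat)
  (u w : int -> R -> {poly R}) (i : int) (t : R)
  (hlam : 0 < lam) (hh : 0 < h) (hNM : (N <= M)%N)
  (* u_h(.,t) in V_h : degree <= N on each cell *)
  (hu_deg : forall (j : int) (s : R), (size (u j s) <= N.+1)%N)
  (* w_h(.,t) : degree <= M on each cell *)
  (hw_deg : forall (j : int) (s : R), (size (w j s) <= M.+1)%N)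
  (* u_h differentiable in t *)
  (hu_diff : forall (j : int) (x s : R), derivable (fun r => (u j r).[x]) s 1)
  (* moment preservation of the reconstruction w_h *)
  (hmom : forall (j : int) (s : R) (phi : {poly R}), (size phi <= N.+1)%N ->
     cint h j (fun x => phi.[x] * (w j s).[x]) =
     cint h j (fun x => phi.[x] * (u j s).[x]))
  (* semi-discrete P_N P_M scheme with upwind flux, on every cell, at all times *)
  (hscheme : forall (j : int) (s : R) (phi : {poly R}), (size phi <= N.+1)%N ->
     cint h j (fun x => derive1 (fun r => (u j r).[x]) s * phi.[x])
     + flux_w lam h w j s * phi.[xhalf h j]
     - flux_w lam h w (j - 1) s * phi.[xhalf h (j - 1)]
     - cint h j (fun x => lam * (w j s).[x] * (deriv phi).[x]) = 0) :
  ((lim_minus h u (i - 1) t > lim_plus h u (i - 1) t /\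
    lim_minus h w (i - 1) t >= (lim_minus h u (i - 1) t + lim_plus h u (i - 1) t) / 2)
   \/
   (lim_minus h u (i - 1) t < lim_plus h u (i - 1) t /\
    lim_minus h w (i - 1) t <= (lim_minus h u (i - 1) t + lim_plus h u (i - 1) t) / 2)) ->
  derive1 (Ecell h u i) t + Ftilde lam h u w i t - Ftilde lam h u w (i - 1) t <= 0.
Proof.
move=> Hcase.
set n := N.+1.
set a := xhalf h (i - 1); set b := xhalf h i.
have ab : a < b.
  have -> : a = b - h by rewrite /a /b /xhalf rmorphB /=; ring.
  lra.
pose xs : nat -> R := fun k => k%:R.
have xs_inj : injective xs by move=> m k /eqP; rewrite /xs eqr_nat => /eqP.
pose L (k : 'I_n) : {poly R} := (tnth (@lagrange R n xs) k : {poly R}).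
pose al (k : 'I_n) (r : R) := (u i r).[xs k].
have Gen r : u i r = \sum_(k < n) al k r *: L k.
  rewrite {1}(@lagrange_gen R n xs _ xs_inj (u i r)) //.
  by apply: eq_bigr => k _; rewrite mul_polyC.
pose da (k : 'I_n) := 'D_1 (al k) t.
have Hda k : is_derive t (1:R) (al k) (da k).
  exact: derivableP (hu_diff i (xs k) t).
pose C (k l : 'I_n) := J a b (L k * L l).
have Cs k l : C k l = C l k by rewrite /C mulrC.
pose D := \sum_(k < n) da k *: L k.
set U := u i t.
have dpt x : derive1 (fun r => (u i r).[x]) t = D.[x].
  have -> : (fun r => (u i r).[x]) = (fun r => \sum_(k < n) al k r * (L k).[x]).
    apply/funext => r; rewrite {1}Gen horner_sum.
    by apply: eq_bigr => k _; rewrite hornerZ.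
  have HH : is_derive t (1:R) (fun r => \sum_(k < n) al k r * (L k).[x])
      (\sum_(k < n) da k * (L k).[x]).
    by apply: is_derive_sumf => k; exact: is_derive_mulc.
  rewrite derive1E (@derive_val _ _ _ _ _ _ _ HH).
  rewrite /D horner_sum; apply: eq_bigr => k _; by rewrite hornerZ.
have dE : derive1 (Ecell h u i) t = \sum_k \sum_l da k * al l t * C k l.
  have -> : Ecell h u i = 2^-1 \*: (fun r => \sum_k \sum_l al k r * al l r * C k l).
    apply/funext => r /=.
    rewrite /Ecell (_ : (fun x => (u i r).[x] ^+ 2 / 2) = horner (2^-1 *: (u i r * u i r))); last first.
      by apply/funext => x; rewrite hornerZ hornerM mulrC expr2.
    rewrite cintJ JZ -/a -/b [X in J a b (X * _)]Gen [X in J a b (_ * X)]Gen J_bil.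
    by [].
  rewrite derive1E (@derive_val _ _ _ _ _ _ _ (is_deriveZ (2^-1) (quad_deriv Cs Hda))).
  by rewrite /GRing.scale /= mulrA mulVf ?mul1r // pnatr_eq0.
have hs := hscheme i t U (hu_deg i t).
have e1 : cint h i (fun x => derive1 (fun r => (u i r).[x]) t * U.[x])
          = \sum_k \sum_l da k * al l t * C k l.
  rewrite (_ : (fun x => _) = horner (D * U)); last first.
    by apply/funext => x; rewrite dpt hornerM.
  by rewrite cintJ -/a -/b /D /U (Gen t) J_bil.
have e2 : cint h i (fun x => lam * (w i t).[x] * (deriv U).[x])
          = lam * ((U.[b] ^+ 2 - U.[a] ^+ 2) / 2).
  rewrite (_ : (fun x => _) = horner (lam *: (deriv U * w i t))); last first.
    by apply/funext => x; rewrite hornerZ hornerM; ring.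
  rewrite cintJ JZ -cintJ.
  rewrite (_ : horner (deriv U * w i t) = (fun x => (deriv U).[x] * (w i t).[x])); last first.
    by apply/funext => x; rewrite hornerM.
  have sU' : (size (deriv U) <= N.+1)%N.
    have [U0|nz] := eqVneq U 0; first by rewrite U0 deriv0 size_poly0.
    exact: ltnW (leq_trans (lt_size_deriv nz) (hu_deg i t)).
  rewrite hmom //.
  rewrite (_ : (fun x => _) = horner (deriv U * U)); last first.
    by apply/funext => x; rewrite hornerM.
  by rewrite cintJ J_ftc.
rewrite e1 e2 in hs.
rewrite dE.
move: hs Hcase; rewrite /Ftilde /g_prim /lim_plus subrK /lim_minus -/a -/b.
rewrite [flux_w lam h w (i - 1) t]/flux_w /lim_minus.
set S := \sum_k _; set fr := flux_w _ _ _ _ _.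
set ua := U.[a]; set ub := U.[b]; set ul := (u (i - 1) t).[a].
set wl := (w (i - 1) t).[a] => hs Hc.
have key : (ua - ul) * (wl - (ul + ua) / 2) <= 0.
  case: Hc => [[h1 h2]|[h1 h2]].
  - by apply: mulr_le0_ge0; lra.
  - by apply: mulr_ge0_le0; lra.
have -> : S + (fr * ub - lam * ub ^+ 2 / 2) - (lam * wl * ul - lam * ul ^+ 2 / 2)
  = (S + fr * ub - lam * wl * ua - lam * ((ub ^+ 2 - ua ^+ 2) / 2))
    + lam * ((ua - ul) * (wl - (ul + ua) / 2)) by ring.
rewrite hs add0r.
by apply: mulr_ge0_le0 => //; exact: ltW.
Qed.
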